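(* Let $s\in\mathbb{N}$, let $B$ be a Banach space of real functions on $[0,1]^s$ with norm $\|\cdot\|_B$, and let $S$ be a collection of finite multisets of points in $[0,1]^s$ equipped with a probability distribution, $P$ denoting a random element of $S$. Suppose $\epsilon>0$ and $\delta\in(0,1)$ satisfy \[\Pr\left[e^{\mathrm{wor}}(Q_P;B)\le\epsilon\right]\ge1-\delta.\] Let $r$ be an odd positive integer and let $P_1,\ldots,P_r$ be drawn independently from $S$ according to the same distribution. Then \[\Pr\left[e^{\mathrm{wor}}(M_r;B)\le\epsilon\right]\ge1-\binom{r}{(r+1)/2}\delta^{(r+1)/2}.\]
   Context: For a finite multiset $P\subset[0,1]^s$ with $N=|P|$, $Q_P(f)=\frac1N\sum_{\boldsymbol x\in P}f(\boldsymbol x)$ and $I_s(f)=\int_{[0,1]^s}f(\boldsymbol x)\,\mathrm d\boldsymbol x$. The median rule is $M_r(f)=\mathrm{median}(Q_{P_1}(f),\ldots,Q_{P_r}(f))$. For a (deterministic, given realization) rule $A$, the worst-case error is $e^{\mathrm{wor}}(A;B)=\sup_{f\in B,\|f\|_B\le1}|A(f)-I_s(f)|$. *)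

(* Defs.v *)
From HB Require Import structures.
From mathcomp Require Import all_boot all_order all_algebra.
From mathcomp Require Import all_classical all_reals all_analysis.
Set Implicit Arguments. Unset Strict Implicit. Unset Printing Implicit Defensive.
Import Order.TTheory GRing.Theory Num.Theory.
Import numFieldNormedType.Exports.
Local Open Scope classical_set_scope.
Local Open Scope ring_scope.

Section QMC.
Variable R : realType.

Definition unit_cube (s : nat) : set 'rV[R]_s :=
  [set x | forall i, 0 <= x ord0 i <= 1].

(* I_s(f) = \int_{[0,1]^s} f, written as the iterated Lebesgue integral
   \int_0^1 ... \int_0^1 f(x_1,...,x_s) dx_s ... dx_1. *)
Fixpoint cube_integral (s : nat) : ('rV[R]_s -> R) -> R :=
  match s return ('rV[R]_s -> R) -> R with
  | 0 => fun f => f 0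
  | s'.+1 => fun f =>
      Rintegral lebesgue_measure `[0, 1]
        (fun x : R => cube_integral (fun y : 'rV[R]_s' =>
            f (row_mx (const_mx x : 'rV[R]_1) y)))
  end.

(* Q_P(f) = (1/N) sum_{x in P} f(x), for a finite multiset P given as a seq. *)
Definition qmc_rule (s : nat) (P : seq 'rV[R]_s) (f : 'rV[R]_s -> R) : R :=
  (size P)%:R^-1 * \sum_(x <- P) f x.

Definition median (xs : seq R) : R :=
  nth 0 (sort <=%R xs) (size xs)./2.

Definition median_rule (s r : nat) (Ps : 'I_r -> seq 'rV[R]_s)
    (f : 'rV[R]_s -> R) : R :=
  median [seq qmc_rule (Ps i) f | i <- enum 'I_r].

(* Worst-case error of a rule A on the unit ball of the function space V,
   whose elements are realized as real functions through ev. *)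
Definition wce (s : nat) (V : normedModType R) (ev : V -> 'rV[R]_s -> R)
    (A : ('rV[R]_s -> R) -> R) : \bar R :=
  ereal_sup [set (`| A (ev f) - cube_integral (ev f) |)%:E | f in [set f : V | `|f| <= 1]].

Definition mutually_independent (d d' : measure_display)
    (Omega : measurableType d) (S : measurableType d')
    (Pr : probability Omega R) (r : nat) (X : 'I_r -> Omega -> S) : Prop :=
  forall A : 'I_r -> set S, (forall i, measurable (A i)) ->
    Pr (\bigcap_(i in [set: 'I_r]) (X i @^-1` A i)) =
    (\prod_(i < r) Pr (X i @^-1` A i))%E.

End QMC.

(* Main.v *)
Require Import Defs.
Set Warnings "-all".
From HB Require Import structures.
From mathcomp Require Import all_boot all_order all_algebra.
From mathcomp Require Import all_classical all_reals all_analysis.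
From mathcomp Require Import zify lra.
Import Order.TTheory GRing.Theory Num.Theory.
Import numFieldNormedType.Exports.
Local Open Scope ring_scope.

Lemma cnt_card (r : nat) (p : pred 'I_r) : count p (enum 'I_r) = #|[set i | p i]|.
Proof.
rewrite cardsE cardE /enum_mem -enumT size_filter.
rewrite (@eq_filter _ _ predT) // filter_predT. by apply: eq_count.
Qed.

Lemma subset_card (T : finType) (A : {set T}) k :
  (k <= #|A|)%N -> exists B : {set T}, B \subset A /\ #|B| = k.
Proof.
move=> hk; exists [set x in take k (enum A)]; split.
  by apply/fintype.subsetP => x; rewrite inE => /mem_take; rewrite mem_enum.
rewrite cardsE; have /card_uniqP -> : uniq (take k (enum A)) by rewrite take_uniq // enum_uniq.
by rewrite size_take -cardE; case: ltnP hk => // ? ?; apply/eqP; rewrite eqn_leq; apply/andP.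
Qed.

Lemma sorted_mid (R : realDomainType) (ys : seq R) k (a b : R) : sorted <=%R ys -> size ys = k.*2.+1 ->
  (k < count (fun x => (a <= x <= b)%R) ys)%N -> a <= nth 0 ys k <= b.
Proof.
move=> so sz hc.
have mono i j : (i <= j)%N -> (j < size ys)%N -> nth 0 ys i <= nth 0 ys j.
  move=> hij hj; apply: (sorted_leq_nth le_trans lexx) => //; rewrite inE //.
  exact: leq_ltn_trans hj.
apply/andP; split; rewrite leNgt; apply/negP => hlt; move: hc; apply/negP; rewrite -leqNgt.
- rewrite -(cat_take_drop k.+1 ys) count_cat.
  have -> : count (fun x => a <= x <= b) (take k.+1 ys) = 0%N.
    apply/eqP; rewrite -leqn0 leqNgt -has_count; apply/negP => /(has_nthP 0) [j].
    rewrite size_take sz -addnn => hj; have {hj} hj : (j < k.+1)%N by move: hj; case: ifP => // /negbT; rewrite -leqNgt; lia.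
    rewrite nth_take //; move/andP => [h _]; move: hlt; apply/negP; rewrite -leNgt.
    apply: (le_trans h); apply: mono; first by []. rewrite sz -addnn; clear -hj; lia.
  rewrite add0n; apply: leq_trans (count_size _ _) _; by rewrite size_drop sz -addnn subSS addnK.
- rewrite -(cat_take_drop k ys) count_cat.
  have -> : count (fun x => a <= x <= b) (drop k ys) = 0%N.
    apply/eqP; rewrite -leqn0 leqNgt -has_count; apply/negP => /(has_nthP 0) [j].
    rewrite size_drop sz -addnn => hj.
    rewrite nth_drop; move/andP => [_ h]; move: hlt; apply/negP; rewrite -leNgt.
    apply: (le_trans _ h); apply: mono; first exact: leq_addr. rewrite sz -addnn; clear -hj; lia.
  rewrite addn0; apply: leq_trans (count_size _ _) _; rewrite size_take sz -addnn; case: ltnP => // _; exact: leqnn.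
Qed.

Lemma median_close (R : realType) (xs : seq R) (c e : R) : odd (size xs) ->
  ((size xs)./2 < count (fun x => (`|x - c| <= e)%R) xs)%N -> `|median xs - c| <= e.
Proof.
move=> od hc; rewrite /median ler_distl.
have sz : size (sort <=%R xs) = ((size xs)./2).*2.+1.
  by rewrite size_sort -{1}(odd_double_half (size xs)) od add1n.
apply: sorted_mid => //; first exact: (sort_sorted le_total).
rewrite (permP (permEl (perm_sort _ xs))).
by rewrite (eq_count (a2 := fun x => `|x - c| <= e)) // => x; rewrite ler_distl.
Qed.

Lemma wce_leP (R : realType) s (V : normedModType R) (ev : V -> 'rV[R]_s -> R)
  (A : ('rV[R]_s -> R) -> R) (eps : R) :
  (wce ev A <= eps%:E)%E <->
  (forall f : V, `|f| <= 1 -> `|A (ev f) - cube_integral (ev f)| <= eps).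
Proof.
split.
- move=> h f hf; rewrite -lee_fin; apply: le_trans h; apply: ereal_sup_ubound.
  by exists f.
- move=> h; apply: ge_ereal_sup => _ [f hf <-]; rewrite lee_fin; exact: h.
Qed.

Lemma median_good (R : realType) s (V : normedModType R) (ev : V -> 'rV[R]_s -> R)
  (r : nat) (Ps : 'I_r -> seq 'rV[R]_s) (eps : R) : odd r ->
  (r./2 < #|[set i | (wce ev (qmc_rule (Ps i)) <= eps%:E)%E]|)%N ->
  (wce ev (median_rule Ps) <= eps%:E)%E.
Proof.
move=> od hc; apply/wce_leP => f hf; rewrite /median_rule.
apply: median_close; rewrite size_map size_enum_ord // count_map.
apply: leq_trans hc _; rewrite -cnt_card; apply: sub_count => i /= /wce_leP; apply.
exact: hf.
Qed.

Lemma union_bound d (T : measurableType d) (R : realType) (mu : measure T R)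
  (I : Type) (s : seq I) (P : pred I) (F : I -> set T) :
  (forall i, measurable (F i)) ->
  measurable (\big[setU/set0]_(i <- s | P i) F i) /\
  (mu (\big[setU/set0]_(i <- s | P i) F i) <= \sum_(i <- s | P i) mu (F i))%E.
Proof.
move=> hF; elim: s => [|x s [ih1 ih2]]; first by rewrite !big_nil measure0.
rewrite !big_cons; case: (P x) => //; split; first exact: measurableU.
apply: le_trans (measureU2 _ _ _) _ => //; exact: leeD.
Qed.

Lemma in_bigsetU (T : Type) (I : eqType) (s : seq I) (P : pred I) (F : I -> set T) i x :
  i \in s -> P i -> F i x -> (\big[setU/set0]_(j <- s | P j) F j) x.
Proof.
elim: s => // y s ih; rewrite inE big_cons => /orP [/eqP <- | h] hp hf.
  by rewrite hp; left.
case: (P y); [right|]; exact: ih.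
Qed.

Local Open Scope classical_set_scope.

Theorem proposition3p2 (R : realType) (s : nat)
  (B : completeNormedModType R) (ev : B -> 'rV[R]_s -> R)
  (ev_lin : forall (a : R) (u v : B) (x : 'rV[R]_s),
      ev (a *: u + v) x = a * ev u x + ev v x)
  (ev_inj : forall u v : B,
      (forall x, unit_cube x -> ev u x = ev v x) -> u = v)
  (d1 : measure_display) (S : measurableType d1)
  (pts : S -> seq 'rV[R]_s)
  (pts_cube : forall (p : S) (x : 'rV[R]_s), x \in pts p -> unit_cube x)
  (mu : probability S R)
  (eps delta : R) (eps_gt0 : 0 < eps) (delta01 : 0 < delta < 1)
  (good_meas : measurable [set p : S | (wce ev (qmc_rule (pts p)) <= eps%:E)%E])
  (hyp : ((1 - delta)%:E <= mu [set p : S | (wce ev (qmc_rule (pts p)) <= eps%:E)%E])%E)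
  (r : nat) (r_odd : odd r)
  (d2 : measure_display) (Omega : measurableType d2) (Pr : probability Omega R)
  (X : 'I_r -> Omega -> S)
  (X_meas : forall i, measurable_fun setT (X i))
  (X_law : forall i (A : set S), measurable A -> Pr (X i @^-1` A) = mu A)
  (X_indep : mutually_independent Pr X)
  (median_event_meas : measurable
      [set w : Omega | (wce ev (median_rule (fun i => pts (X i w))) <= eps%:E)%E]) :
  ((1 - ('C(r, r.+1./2))%:R * delta ^+ (r.+1./2))%:E <=
    Pr [set w : Omega | (wce ev (median_rule (fun i => pts (X i w))) <= eps%:E)%E])%E.
Proof.
set k := r./2.
have hk : r.+1./2 = k.+1 by rewrite /= uphalf_half r_odd.
have hr : r = k.*2.+1 by rewrite -[LHS](odd_double_half r) r_odd add1n.
rewrite hk.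
set good := [set p : S | (wce ev (qmc_rule (pts p)) <= eps%:E)%E].
set bad := ~` good.
have bad_meas : measurable bad by exact: measurableC.
have Xpre i : measurable (X i @^-1` bad).
  by have := X_meas i measurableT _ bad_meas; rewrite setTI.
set b := fine (mu bad).
have mub : mu bad = b%:E by rewrite fineK // fin_num_measure.
set g := fine (mu good).
have mug : mu good = g%:E by rewrite fineK // fin_num_measure.
have hb : b <= delta.
  have := probability_setC mu good_meas; rewrite -/bad mub mug -EFinB => -[->].
  move: hyp; rewrite -/good mug lee_fin; lra.
have hb0 : 0 <= b by rewrite /b fine_ge0 // measure_ge0.
pose A (T : {set 'I_r}) (i : 'I_r) := if i \in T then bad else setT.
have A_meas T i : measurable (A T i) by rewrite /A; case: ifP.
pose E (T : {set 'I_r}) := \bigcap_(i in [set: 'I_r]) (X i @^-1` A T i).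
have E_meas T : measurable (E T).
  apply: fin_bigcap_measurable; first exact: finite_finset.
  move=> i _; rewrite /A; case: ifP => _ //; rewrite preimage_setT; exact: measurableT.
have PrE (T : {set 'I_r}) : #|T| = k.+1 -> (Pr (E T) <= (delta ^+ k.+1)%:E)%E.
  move=> hT; rewrite /E X_indep //.
  rewrite (eq_bigr (fun i => (if i \in T then b else 1)%:E)); last first.
    move=> i _; rewrite X_law // /A; case: ifP => _ //; exact: probability_setT.
  rewrite prodEFin lee_fin -big_mkcond /= prodr_const.
  have -> : #|[pred i : 'I_r | i \in T]| = k.+1 by rewrite -hT.
  by apply: lerXn2r => //; rewrite nnegrE; lra.
pose U := \big[setU/set0]_(T : {set 'I_r} | #|T| == k.+1) E T.
have [U_meas hU] := union_bound _ _ _ Pr _ (index_enum _) (fun T : {set 'I_r} => #|T| == k.+1) E E_meas.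
have hPU : (Pr U <= (('C(r, k.+1))%:R * delta ^+ k.+1)%:E)%E.
  apply: (le_trans hU).
  apply: (le_trans (lee_sum (g := fun _ => (delta ^+ k.+1)%:E) _ _)).
    by move=> T hT; exact: PrE (eqP hT).
  rewrite sumEFin lee_fin sumr_const.
  have -> : #|[pred T : {set 'I_r} | #|T| == k.+1]| = 'C(r, k.+1).
    by rewrite -[in RHS](card_ord r) -card_draws; apply: eq_card => T; rewrite !inE.
  by rewrite mulr_natl.
set G := [set w : Omega | (wce ev (median_rule (fun i => pts (X i w))) <= eps%:E)%E].
have sub : ~` G `<=` U.
  move=> w hw.
  pose Bd := [set i | ~~ (wce ev (qmc_rule (pts (X i w))) <= eps%:E)%E]%SET.
  have hB : (k < #|Bd|)%N.
    rewrite ltnNge; apply/negP => hle; apply: hw; apply: median_good => //.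
    have hc : #|[set i | (wce ev (qmc_rule (pts (X i w))) <= eps%:E)%E]%SET| = #|~: Bd|.
      by apply: eq_card => i; rewrite !inE negbK.
    rewrite -/k hc.
    have hr2 : r = (k + k).+1 by rewrite {1}hr -addnn.
    have := cardsC Bd; rewrite card_ord.
    move: hle hr2; move: #|Bd| #|~: Bd| => a c.
    move=> *; lia.
  have [T [hTB hT]] := subset_card _ _ _ hB.
  apply: (@in_bigsetU _ _ _ _ _ T); [exact: mem_index_enum | by rewrite hT eqxx |].
  move=> i _; rewrite /A; case: ifP => hi //=.
  by have := fintype.subsetP hTB i hi; rewrite inE => /negP.
have hC : (Pr (~` G) <= (('C(r, k.+1))%:R * delta ^+ k.+1)%:E)%E.
  apply: le_trans hPU; apply: le_measure => //; rewrite inE //; exact: measurableC.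
rewrite -(setCK G) probability_setC; last exact: measurableC.
move: hC; rewrite -(fineK (fin_num_measure Pr _ (measurableC median_event_meas))).
rewrite -EFinB !lee_fin; lra.
Qed.
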